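(* Let $G$ be a finite group. Then there exist a finite group $\widetilde G$ and a surjective group homomorphism $\varphi \colon \widetilde G \to G$ such that for any two subgroups $G_1, G_2 \le G$ that are not conjugate in $G$, the pre-images $\varphi^{-1}(G_1)$ and $\varphi^{-1}(G_2)$ are not isomorphic (as abstract groups). *)

(* Defs.v *)
From mathcomp Require Import all_boot all_fingroup.
Set Implicit Arguments. Unset Strict Implicit. Unset Printing Implicit Defensive.

(* Main.v *)
Require Import Defs.
From mathcomp Require Import all_boot all_fingroup.
From mathcomp Require Import all_solvable.
Set Implicit Arguments. Unset Strict Implicit. Unset Printing Implicit Defensive.
Local Open Scope group_scope.
Section Ext.
Variables (T W : finType) (e : T -> W) (d : W -> option T).
Hypothesis de : forall t, d (e t) = Some t.
Hypothesis ed : forall w t, d w = Some t -> e t = w.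

Definition ext_fun (s : {perm T}) w := if d w is Some t then e (s t) else w.

Lemma ext_funK s : cancel (ext_fun s) (ext_fun s^-1).
Proof.
move=> w; rewrite /ext_fun; case E: (d w) => [t|]; last by rewrite E.
by rewrite de permK; apply: ed.
Qed.

Definition ext s := perm (can_inj (ext_funK s)).

Lemma extE s w : ext s w = ext_fun s w.
Proof. by rewrite permE. Qed.

Lemma ext_e s t : ext s (e t) = e (s t).
Proof. by rewrite extE /ext_fun de. Qed.

Lemma ext_fix s w : d w = None -> ext s w = w.
Proof. by rewrite extE /ext_fun => ->. Qed.

Lemma ext_morphM : {morph ext : s t / s * t}.
Proof.
move=> s t; apply/permP => w; rewrite permM !extE /ext_fun.
case E: (d w) => [u|]; last by rewrite E.
by rewrite de permM.
Qed.

Canonical ext_morphism := @Morphism _ _ setT ext (in2W ext_morphM).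

Lemma e_inj : injective e.
Proof. by move=> a b eab; have := de a; rewrite eab de => -[]. Qed.

Lemma ext_injm : 'injm ext_morphism.
Proof.
apply/injmP => s t _ _ /= est; apply/permP => u.
by apply: e_inj; rewrite -!ext_e est.
Qed.

End Ext.
Section Constr.
Variables (gT : finGroupType) (G : {group gT}).

Definition X := ({set gT} * {set gT})%type.
Definition nx (x : X) : nat := #|G| + 5 + enum_rank x.1.
Definition Mb := #|G| + 5 + #|{set gT}|.
Lemma nx_le x : nx x <= Mb.
Proof. by rewrite /nx leq_add2l ltnW. Qed.
Definition Om := (X * 'I_Mb)%type.
Definition ex (x : X) (j : 'I_(nx x)) : Om := (x, widen_ord (nx_le x) j).
Definition dx (x : X) (w : Om) : option 'I_(nx x) :=
  if w.1 == x then insub (val w.2) else None.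
Lemma dx_ex x j : dx x (ex j) = Some j.
Proof. by rewrite /dx /ex /= eqxx valK. Qed.
Lemma ex_dx x w j : dx x w = Some j -> ex j = w.
Proof.
rewrite /dx; case: eqP => // wx; case: insubP => // u _ uw [<-].
by case: w wx uw => a b /= -> uw; congr (_, _); apply: val_inj.
Qed.

Definition blk x := ext_morphism (@dx_ex x) (@ex_dx x).
Definition S x : {group {perm Om}} := (blk x @* 'Alt_('I_(nx x)))%G.

Lemma blk_fst x s w : (blk x s w).1 = w.1.
Proof.
rewrite /= extE /ext_fun; case E: (dx x w) => [t|] //.
by rewrite -(ex_dx E).
Qed.

Lemma blk_fix x s w : w.1 != x -> blk x s w = w.
Proof. by move=> nx; rewrite /= ext_fix // /dx (negbTE nx). Qed.


Definition xa (x : X) (g : gT) : X := (x.1, x.2 :* g).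
Definition rho_fun (g : gT) (w : Om) : Om := (xa w.1 g, w.2).
Lemma rho_funK g : cancel (rho_fun g) (rho_fun g^-1).
Proof. by case=> [[a b] i]; rewrite /rho_fun /xa /= rcosetK. Qed.
Definition rho g := perm (can_inj (rho_funK g)).
Lemma rhoE g w : rho g w = (xa w.1 g, w.2).
Proof. by rewrite permE. Qed.
Lemma rho_morphM : {morph rho : g h / g * h}.
Proof.
move=> g h; apply/permP => w; rewrite permM !rhoE /xa /=.
by rewrite rcosetM.
Qed.
Canonical rho_morphism := @Morphism _ _ setT rho (in2W rho_morphM).

Lemma rho_injm : 'injm rho_morphism.
Proof.
apply/injmP => g h _ _ /= egh.
have Mb0 : 0 < Mb by rewrite /Mb !addn_gt0 /= orbT.
have i0 : 'I_Mb := Ordinal Mb0.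
have := congr1 (fun r : {perm Om} => (r ((set0, [set 1 : gT]), i0)).1.2) egh.
rewrite /= !rhoE /xa /= => /setP /(_ g).
rewrite !mem_rcoset !inE mulgV eqxx => /esym /eqP.
by move/eqP; rewrite -eq_mulgV1 => /eqP.
Qed.

Lemma xaK h : cancel (xa^~ h) (xa^~ h^-1).
Proof. by case=> a b; rewrite /xa /= rcosetK. Qed.
Lemma xaKV h : cancel (xa^~ h^-1) (xa^~ h).
Proof. by move=> x; rewrite -{2}(invgK h) xaK. Qed.

Lemma rhoV h : (rho h)^-1 = rho h^-1.
Proof. by apply/permP => w; apply: (canLR (permK (rho h))); rewrite !rhoE /= xaKV; case: w. Qed.

Lemma blkJ x h s : blk x s ^ rho h = blk (xa x h) s.
Proof.
apply/permP => w; rewrite conjgE !permM rhoV /= !extE /ext_fun /dx /= (rhoE h^-1) /=.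
have -> : (xa w.1 h^-1 == x) = (w.1 == xa x h).
  apply/eqP/eqP => [<-|->]; [by rewrite xaKV | by rewrite xaK].
case: eqP => [wx|_]; last by rewrite rhoE /= xaKV; case: w.
case: insubP => [t _ tw|_]; last by rewrite rhoE /= xaKV; clear wx; case: w.
by rewrite rhoE /=; congr (_, _); apply: val_inj.
Qed.

Lemma SJ x h : S x :^ rho h = S (xa x h).
Proof.
rewrite /S /= !morphimE /conjugate -imset_comp.
by apply: eq_imset => s /=; exact: blkJ.
Qed.

Lemma blk_comm x y s t : x != y -> commute (blk x s) (blk y t).
Proof.
move=> nxy; apply/permP => w; rewrite !permM.
have [wx|wx] := eqVneq w.1 x.
  have wy : w.1 != y by rewrite wx.
  by rewrite (blk_fix _ wy) blk_fix // (@blk_fst x s w) wx.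
rewrite (blk_fix _ wx) [in RHS]blk_fix //.
by rewrite (@blk_fst y t w).
Qed.

Lemma S_cent x y : x != y -> S x \subset 'C(S y).
Proof.
move=> nxy; apply/centsP => a /morphimP[s _ _ ->] b /morphimP[t _ _ ->].
exact: blk_comm.
Qed.

Lemma S_fix x (A : {set Om}) : (forall w, w \in A -> w.1 != x) ->
  S x \subset 'C(A | 'P).
Proof.
move=> hA; apply/subsetP => a /morphimP[s _ _ ->].
apply/astabP => w /hA wx /=.
exact: blk_fix.
Qed.

Lemma S_TI x : S x :&: 'C([set w : Om | w.1 == x] | 'P) = 1.
Proof.
apply/eqP; rewrite eqEsubset sub1G andbT; apply/subsetP => a.
rewrite inE => /andP[/morphimP[s _ _ ->] /astabP fx].
suff -> : s = 1 by rewrite morph1 inE.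
apply/permP => j; apply: (@e_inj _ _ _ _ (@dx_ex x)).
have := fx (ex j); rewrite inE eqxx => /(_ isT) /=.
by rewrite apermE ext_e perm1.
Qed.

Lemma card_S x : (#|S x| = #|'Alt_('I_(nx x))|)%N.
Proof. by rewrite card_injm ?subsetT //; exact: ext_injm. Qed.

Lemma simple_S x : simple (S x).
Proof.
rewrite -(isog_simple (sub_isog (subsetT _) (ext_injm (@dx_ex x) (@ex_dx x)))).
by apply: simple_Alt5; rewrite card_ord /nx -addnA addnCA leq_addr.
Qed.

Lemma fact_ge2n n : 2 < n -> (2 * n <= n`!)%N.
Proof.
case: n => // k lt2k; rewrite factS mulnC leq_mul2l /=.
by apply: leq_trans (fact_geq k); rewrite -ltnS.
Qed.

Lemma big_S x : (#|G| < #|S x|)%N.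
Proof.
have n5 : (5 <= nx x)%N by rewrite /nx -addnA addnCA leq_addr.
have : (2 * nx x <= 2 * #|'Alt_('I_(nx x))|)%N.
  by rewrite card_Alt card_ord ?(leq_trans _ n5) // fact_ge2n // (leq_trans _ n5).
rewrite leq_mul2l /= card_S => h; apply: leq_trans h.
by rewrite /nx -addnA addSn addnS ltnS leq_addr.
Qed.

Lemma card_S_inj x y : #|S x| = #|S y| -> x.1 = y.1.
Proof.
have n5 z : (5 <= nx z)%N by rewrite /nx -addnA addnCA leq_addr.
rewrite !card_S => e.
have : (nx x)`! = (nx y)`!.
  have ax := card_Alt (T:='I_(nx x)); have ay := card_Alt (T:='I_(nx y)).
  rewrite !card_ord in ax ay.
  by rewrite -ax ?(leq_trans _ (n5 _)) // -ay ?(leq_trans _ (n5 _)) // e.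
move=> ef.
have p0 z : nx z \in [pred n | 0 < n] by rewrite inE (leq_trans _ (n5 z)).
have : nx x == nx y.
  by rewrite eqn_leq -(leq_pfact (p0 x) (p0 y)) -(leq_pfact (p0 y) (p0 x)) ef leqnn.
by rewrite /nx eqn_add2l => /eqP /val_inj /enum_rank_inj.
Qed.

Lemma center_S x : 'Z(S x) = 1.
Proof.
have [_ hs] := simpleP _ (simple_S x).
case: (hs _ (center_normal (S x))) => eZ.
  exact: eZ.
have ab : abelian (S x) by apply/center_idP; exact: eZ.
have := abelian_sol ab.
rewrite -(isog_sol (sub_isog (subsetT _) (ext_injm (@dx_ex x) (@ex_dx x)))).
by rewrite solvable_AltF // card_ord /nx -addnA addnCA leq_addr.
Qed.

Lemma S_neq1 x : S x :!=: 1.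
Proof.
apply/eqP => e; have := big_S x; rewrite e cards1.
by rewrite ltnNge cardG_gt0.
Qed.

Lemma S_inj x y : S x :=: S y -> x = y.
Proof.
move=> e; apply/eqP; apply/negPn/negP => nxy.
have sy : S y \subset 'C([set w : Om | w.1 == x] | 'P).
  by apply: S_fix => w; rewrite inE => /eqP ->.
have : S x \subset S x :&: 'C([set w : Om | w.1 == x] | 'P).
  by rewrite subsetI subxx e sy.
by rewrite S_TI subG1 (negbTE (S_neq1 x)).
Qed.

Definition Xs := [set x : X | [&& group_set x.1, x.1 \subset G & x.2 \in rcosets x.1 G]].
Definition N := <<\bigcup_(x in Xs) S x>>.

Lemma xa_Xs x g : x \in Xs -> g \in G -> xa x g \in Xs.
Proof.
rewrite !inE /xa /= => /and3P[-> -> /rcosetsP[a aG ->]] gG /=.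
by apply/rcosetsP; exists (a * g); rewrite ?groupM // rcosetM.
Qed.

Lemma S_sub_N x : x \in Xs -> S x \subset N.
Proof. by move=> xX; apply: sub_gen; exact: (bigcup_sup x xX). Qed.

Lemma N_norm_S x : x \in Xs -> N \subset 'N(S x).
Proof.
move=> xX; rewrite gen_subG; apply/bigcupsP => y yX.
have [->|nyx] := eqVneq y x; first exact: normG.
by apply: cents_norm; apply: S_cent.
Qed.

Lemma S_normal_N x : x \in Xs -> S x <| N.
Proof. by move=> xX; rewrite /normal S_sub_N // N_norm_S. Qed.

Lemma rhoG_norm_N : rho_morphism @* G \subset 'N(N).
Proof.
apply/subsetP => r /morphimP[g _ gG ->]; apply/normP.
apply/eqP; rewrite eqEcard cardJg leqnn andbT -genJ gen_subG.
apply/subsetP => v; rewrite mem_conjg => /bigcupP[x xX].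
rewrite -mem_conjg SJ => vS.
exact: subsetP (S_sub_N (xa_Xs xX gG)) v vS.
Qed.

Lemma N_fixU : N \subset 'C([set w : Om | w.1 \notin Xs] | 'P).
Proof.
rewrite gen_subG; apply/bigcupsP => x xX; apply: S_fix => w.
by rewrite inE; apply: contraNneq => ->.
Qed.

Lemma N_TI_rho : N :&: rho_morphism @* G = 1.
Proof.
apply/eqP; rewrite eqEsubset sub1G andbT; apply/subsetP => r.
rewrite inE => /andP[rN /morphimP[g _ gG rg]].
have Mb0 : 0 < Mb by rewrite /Mb !addn_gt0 /= orbT.
have i0 : 'I_Mb := Ordinal Mb0.
have w0U : ((set0, [set 1 : gT]), i0) \in [set w : Om | w.1 \notin Xs].
  by rewrite !inE /= /group_set inE.
have := astabP (subsetP N_fixU r rN) _ w0U.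
rewrite /= rg apermE /= rhoE /xa /= => -[] /setP /(_ g).
rewrite !mem_rcoset !inE mulgV eqxx => /esym /eqP /eqP.
by move/eqP ->; rewrite (morph1 rho_morphism).
Qed.

Lemma Z_N z : z \in N -> (forall x, x \in Xs -> z \in 'C(S x)) -> z = 1.
Proof.
move=> zN zC; apply/permP => w; rewrite perm1.
have [wX|wX] := boolP (w.1 \in Xs); last first.
  by have := astabP (subsetP N_fixU z zN) w; rewrite inE wX => /(_ isT) h; exact: h.
set x := w.1 in wX.
pose N' := <<\bigcup_(y in Xs :\ x) S y>>.
have cN' : N' \subset 'C(S x).
  rewrite gen_subG; apply/bigcupsP => y; rewrite !inE => /andP[nyx _].
  exact: S_cent.
have NSN : N \subset S x * N'.
  rewrite -cent_joinEr // gen_subG; apply/bigcupsP => y yX.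
  have [->|nyx] := eqVneq y x; first exact: joing_subl.
  apply: subset_trans (joing_subr _ _); apply: sub_gen.
  by apply: (bigcup_sup y); rewrite in_setD1 nyx yX.
have N'fix : N' \subset 'C([set v : Om | v.1 == x] | 'P).
  rewrite gen_subG; apply/bigcupsP => y; rewrite !inE => /andP[nyx _].
  by apply: S_fix => v; rewrite inE => /eqP ->; rewrite eq_sym.
case/mulsgP: (subsetP NSN z zN) => s t sS tN' zst.
have s1 : s = 1.
  suff : s \in 'Z(S x) by rewrite center_S => /set1gP.
  apply/centerP; split => // a aS.
  have : s = z * t^-1 by rewrite zst mulgK.
  move->; apply: commute_sym; apply: commuteM.
    by apply: commute_sym; move/centP: (zC x wX); apply.
  by apply: commuteV; apply: commute_sym; move/centP: (subsetP cN' t tN'); apply.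
rewrite zst s1 mul1g.
by have := astabP (subsetP N'fix t tN') w; rewrite inE eqxx => /(_ isT) h; exact: h.
Qed.

Definition R := (rho_morphism @* G)%G.
Lemma defGt : N ><| R = N <*> R.
Proof. exact: sdprodEY rhoG_norm_N N_TI_rho. Qed.
Definition Gt := (N <*> R)%G.

Lemma sRT : R \subset rho_morphism @* [set: gT]%G.
Proof. exact: morphimS (subsetT _). Qed.
Definition fK := restrm sRT (invm rho_injm).
Definition fH := @triv_morph _ gT N.
Lemma actf : {in N & R, morph_act 'J 'J fH fK}.
Proof. by move=> a b _ _; rewrite /= /trivm conj1g. Qed.
Definition phi : {morphism Gt >-> gT} := sdprodm_morphism defGt actf.

Lemma phiE n g : n \in N -> g \in G -> phi (n * rho_morphism g) = g.
Proof.
move=> nN gG; rewrite /phi /= sdprodmE //; last first.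
  by apply/morphimP; exists g; rewrite ?inE.
rewrite /= /trivm mul1g; exact: (invmE rho_injm (in_setT g)).
Qed.

Lemma GtE : (Gt : {set _}) = N * R.
Proof. by rewrite /Gt /= norm_joinEr // rhoG_norm_N. Qed.

Lemma im_phi : phi @* Gt = G.
Proof.
apply/setP => g; apply/morphimP/idP => [[v vG _ ->]|gG].
  have : v \in N * R by rewrite -GtE.
  by case/mulsgP => n r nN /morphimP[a _ aG ->] ->; rewrite phiE.
exists (1 * rho_morphism g); last by rewrite phiE.
  by rewrite GtE mem_mulg // mem_morphim ?inE.
by rewrite GtE mem_mulg // mem_morphim ?inE.
Qed.

Lemma preim_phi (H : {group gT}) : H \subset G -> phi @*^-1 H = N * (rho_morphism @* H).
Proof.
move=> sHG; apply/setP => v; apply/morphpreP/idP => [[vG phv]|].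
  have : v \in N * R by rewrite -GtE.
  case/mulsgP => n r nN /morphimP[a _ aG ->] ev; move: phv; rewrite ev.
  by rewrite phiE // => aH; rewrite mem_mulg // mem_morphim ?inE.
case/mulsgP => n r nN /morphimP[a _ aH ->] ->.
have aG := subsetP sHG a aH.
rewrite phiE //; split=> //.
by rewrite GtE mem_mulg // mem_morphim ?inE.
Qed.

Lemma normN_H (H : {group gT}) : H \subset G -> rho_morphism @* H \subset 'N(N).
Proof. by move=> sHG; apply: subset_trans (morphimS _ sHG) rhoG_norm_N. Qed.

Lemma card_preim (H : {group gT}) : H \subset G -> #|N * (rho_morphism @* H)| = (#|N| * #|H|)%N.
Proof.
move=> sHG; rewrite TI_cardMg; last first.
  apply/eqP; rewrite eqEsubset sub1G andbT -N_TI_rho setIS //.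
  exact: morphimS.
by rewrite card_injm ?subsetT //; exact: rho_injm.
Qed.

Definition Hh (H : {group gT}) := (N <*> rho_morphism @* H)%G.
Lemma HhE (H : {group gT}) : H \subset G -> (Hh H : {set _}) = N * (rho_morphism @* H).
Proof. by move=> sHG; rewrite /Hh /= norm_joinEr // normN_H. Qed.

Lemma Hh_norm_N (H : {group gT}) : H \subset G -> Hh H \subset 'N(N).
Proof. by move=> sHG; rewrite join_subG normG normN_H. Qed.

Lemma mk_normal (A B : {set {perm Om}}) : A \subset B -> B \subset 'N(A) -> A <| B.
Proof. by move=> a b; apply/andP. Qed.

Lemma core (H : {group gT}) (M : {group {perm Om}}) :
  H \subset G -> M <| Hh H -> simple M -> (#|G| < #|M|)%N ->
  exists2 y, y \in Xs & (M :=: S y).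
Proof.
move=> sHG /andP[sMH nMH] simM bigM.
have [M1 hsM] := simpleP _ simM.
have sNH : N \subset Hh H by exact: joing_subl.
have nNH := Hh_norm_N sHG.
have nMN : M \subset 'N(M :&: N).
  by rewrite normsI ?normG // (subset_trans sMH nNH).
have [eI|eI] := hsM (M :&: N)%G (mk_normal (subsetIl _ _) nMN).
  exfalso; have := subset_leq_card (mul_subG sMH sNH).
  rewrite TI_cardMg ?eI // HhE // card_preim // mulnC leq_mul2l.
  rewrite -[_ == 0]negbK -lt0n cardG_gt0 /= => le; have := leq_trans le (subset_leq_card sHG).
  by rewrite leqNgt bigM.
have sMN : M \subset N by apply/setIidPl; exact: eI.
case: (boolP [exists y in Xs, M :&: S y != 1]) => [/exists_inP[y yX nI]|].
  have nMy : M \subset 'N(M :&: S y).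
    by rewrite normsI ?normG // (subset_trans sMN (N_norm_S yX)).
  have [eI1|eI1] := hsM (M :&: S y)%G (mk_normal (subsetIl _ _) nMy).
    by rewrite eI1 eqxx in nI.
  have sMy : M \subset S y by apply/setIidPl; exact: eI1.
  have [_ hsy] := simpleP _ (simple_S y).
  have nyM : S y \subset 'N(M).
    by apply: subset_trans nMH; apply: subset_trans sNH; exact: S_sub_N.
  have [eM|eM] := hsy M (mk_normal sMy nyM).
    by move: M1; rewrite eM eqxx.
  by exists y.
move/exists_inPn => hI.
have M1' : M \subset [1 {perm Om}].
  apply/subsetP => m mM; apply/set1gP; apply: Z_N; first exact: subsetP sMN m mM.
  move=> x xX; move: m mM; apply/subsetP; apply/commG1P.
  apply/eqP; rewrite -subG1; move/negPn: (hI x xX) => /eqP <-.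
  apply: commg_subI; rewrite subsetI ?subxx.
    by rewrite (subset_trans sMN (N_norm_S xX)).
  rewrite (subset_trans _ nMH) // (subset_trans _ sNH) //; exact: S_sub_N.
by move: M1; rewrite -subG1 M1'.
Qed.

Lemma S_normal_Hh x (H : {group gT}) : x \in Xs -> H \subset G ->
  (forall h, h \in H -> xa x h = x) -> S x <| Hh H.
Proof.
move=> xX sHG fix_x; rewrite /normal (subset_trans (S_sub_N xX) (joing_subl _ _)).
rewrite join_subG N_norm_S //=; apply/subsetP => r /morphimP[h _ hH ->].
by apply/normP; rewrite /= SJ fix_x.
Qed.

Lemma Hh_normal_S y (H : {group gT}) : S y <| Hh H ->
  forall h, h \in H -> xa y h = y.
Proof.
move=> /andP[_ nSH] h hH; apply: S_inj; rewrite -SJ.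
have : rho_morphism h \in 'N(S y).
  by apply: (subsetP nSH); apply: (subsetP (joing_subr _ _)); rewrite mem_morphim ?inE.
by move/normP.
Qed.
End Constr.

Theorem theorem1p1 (gT : finGroupType) (G : {group gT}) :
  exists (hT : finGroupType) (Gt : {group hT}) (phi : {morphism Gt >-> gT}),
    phi @* Gt = G /\
    forall G1 G2 : {group gT}, G1 \subset G -> G2 \subset G ->
      ~ (exists2 x, x \in G & G2 :=: G1 :^ x) ->
      ~ (phi @*^-1 G1 \isog phi @*^-1 G2).
Proof.
exists _, (Gt G), (phi G); split; first exact: im_phi.
move=> G1 G2 sG1 sG2 nconj iso; apply: nconj.
have cardE : #|G1| = #|G2|.
  have := card_isog iso; rewrite /= !preim_phi // !card_preim //.
  by move/eqP; rewrite eqn_pmul2l ?cardG_gt0 // => /eqP.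
rewrite !preim_phi // -!HhE // in iso.
have [f injf imf] := isogP iso.
pose x0 : X gT := (G1 : {set gT}, G1 : {set gT}).
have x0X : x0 \in Xs G.
  rewrite inE /= groupP sG1 /=; apply/rcosetsP; exists 1; rewrite ?group1 //.
  by rewrite rcoset1.
have nS : S G x0 <| Hh G G1.
  apply: S_normal_Hh => // h hG1.
  by rewrite /xa /= rcoset_id.
have nM : f @* S G x0 <| Hh G G2 by rewrite -imf; apply: morphim_normal.
have isoM : S G x0 \isog (f @* S G x0)%G by apply: sub_isog (normal_sub nS) injf.
have simM : simple (f @* S G x0)%G by rewrite -(isog_simple isoM) simple_S.
have bigM : (#|G| < #|f @* S G x0|)%N.
  by rewrite card_injm ?(normal_sub nS) // big_S.
have [y yX eM] := core sG2 nM simM bigM.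
have ey1 : y.1 = G1.
  have e1 : #|S G x0| = #|S G y|.
    by have := congr1 (fun A : {set {perm Om G}} => #|A|) eM; rewrite /= card_injm ?(normal_sub nS).
  exact: esym (card_S_inj e1).
move: (yX); rewrite inE => /and3P[_ _ /rcosetsP[g gG ey2]].
have nSy : S G y <| Hh G G2 by rewrite -eM.
have fixy := Hh_normal_S nSy.
exists g => //; apply/eqP; rewrite eqEcard cardJg cardE leqnn andbT.
apply/subsetP => h hG2; have := fixy h hG2.
case: y {yX eM nSy fixy} ey1 ey2 => [a b] /= -> ->; rewrite /xa /= => -[].
rewrite -rcosetM => e.
have : g * h \in G1 :* g by rewrite -e rcoset_refl.
rewrite mem_rcoset mem_conjg conjgE invgK => gh.
by rewrite mulgA.
Qed.
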